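(* Let $G\cong K_s\,\square\,K_2$ with $s\ge3$. Then $q(G)=2$, and $G$ has a matrix realization $A\in S(G)$ with exactly two distinct eigenvalues that has the Strong Spectral Property.
   Context: $K_s\square K_2$ is the Cartesian product: vertex set $V(K_s)\times V(K_2)$, with $(g_1,h_1)\sim(g_2,h_2)$ iff ($g_1=g_2$ and $h_1h_2$ an edge) or ($g_1g_2$ an edge and $h_1=h_2$). For a graph $G$ on $n$ vertices, $S(G)$ is the set of real symmetric $n\times n$ matrices $A$ with $a_{ij}\ne0$ ($i\ne j$) iff $ij\in E(G)$ (diagonal unrestricted), and $q(G)$ is the minimum number of distinct eigenvalues of a matrix in $S(G)$. A symmetric matrix $A$ has the Strong Spectral Property (SSP) if the only symmetric matrix $X$ with $A\circ X=O$, $I\circ X=O$ and $AX-XA=O$ is $X=O$ ($\circ$ the entrywise product). *)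

(* Defs.v *)
From HB Require Import structures.
From mathcomp Require Import all_boot all_order all_algebra.
From mathcomp Require Import reals.
Set Implicit Arguments. Unset Strict Implicit. Unset Printing Implicit Defensive.
Import Order.TTheory GRing.Theory Num.Theory.
Local Open Scope ring_scope.

(** Simple graphs: a symmetric irreflexive relation on a finite vertex type. *)

Definition complete_graph (n : nat) : rel 'I_n := fun i j => i != j.

Definition cart_prod (T1 T2 : finType) (e1 : rel T1) (e2 : rel T2) : rel (T1 * T2) :=
  fun u v => ((u.1 == v.1) && e2 u.2 v.2) || (e1 u.1 v.1 && (u.2 == v.2)).

Definition KsK2 (s : nat) : rel ('I_s * 'I_2) :=
  cart_prod (@complete_graph s) (@complete_graph 2).

(** Matrices indexed by a vertex type T are matrices of size #|T|, the
    vertices being labelled through the canonical enumeration of T. *)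

Definition in_S (R : realType) (T : finType) (e : rel T) (A : 'M[R]_#|T|) : Prop :=
  A^T = A /\
  forall i j : 'I_#|T|, i != j -> (A i j != 0) = e (enum_val i) (enum_val j).

Definition num_distinct_eig (R : realType) (n : nat) (A : 'M[R]_n) (k : nat) : Prop :=
  exists sp : seq R, [/\ uniq sp, size sp = k & forall a : R, eigenvalue A a = (a \in sp)].

Definition q_eq (R : realType) (T : finType) (e : rel T) (k : nat) : Prop :=
  (exists A : 'M[R]_#|T|, in_S e A /\ num_distinct_eig A k) /\
  (forall (A : 'M[R]_#|T|) (m : nat), in_S e A -> num_distinct_eig A m -> (k <= m)%N).

Definition hadamard (R : realType) (n : nat) (A X : 'M[R]_n) : 'M[R]_n :=
  \matrix_(i, j) (A i j * X i j).

Definition SSP (R : realType) (n : nat) (A : 'M[R]_n) : Prop :=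
  forall X : 'M[R]_n, X^T = X ->
    hadamard A X = 0 -> hadamard 1%:M X = 0 -> A *m X - X *m A = 0 -> X = 0.

(* Main.v *)
Require Import Defs.
From HB Require Import structures.
From mathcomp Require Import all_boot all_order all_algebra.
From mathcomp Require Import reals.
From mathcomp Require Import complex ring lra.
Import Order.TTheory GRing.Theory Num.Theory.
Local Open Scope ring_scope.
Set Implicit Arguments. Unset Strict Implicit. Unset Printing Implicit Defensive.
Lemma eig_map (R : realType) n (A : 'M[R]_n) (a : R) :
  eigenvalue (map_mx (real_complex R) A) (a%:C)%C = eigenvalue A a.
Proof.
by rewrite !eigenvalue_root_char -map_char_poly fmorph_root.
Qed.

Lemma sym_scalar (R : realType) n (A : 'M[R]_n.+1) (sp : seq R) :
  A^T = A -> (forall a, eigenvalue A a = (a \in sp)) -> (size sp <= 1)%N ->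
  exists a, A = a%:M.
Proof.
move=> AT Aeig Hsp.
pose B := map_mx (real_complex R) A.
have Bh : B \is hermsymmx.
  apply: realsym_hermsym.
    by apply/is_hermitianmxP; rewrite expr0 scale1r map_mx_id // /B map_trmx AT.
  by apply/mxOverP => i j; rewrite mxE; apply/complex_realP; eexists.
have /hermitian_normalmx /orthomx_spectralP BE := Bh.
have dreal := hermitian_spectral_diag_real Bh.
set P := spectralmx B in BE.
set d := spectral_diag B in BE dreal.
have Pu : P \in unitmx by apply: spectral_unit.
have deig : forall i, exists2 r, d 0 i = (r%:C)%C & r \in sp.
  move=> i.
  have /complex_realP [r dr] : d 0 i \is Num.real by apply: (mxOverP dreal).
  exists r => //; rewrite -Aeig -eig_map -dr -/B.
  apply/eigenvalueP; exists (delta_mx 0 i *m P).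
    rewrite BE !mulmxA mulmxK // scalemxAl; congr (_ *m _).
    rewrite mul_mx_diag; apply/matrixP => k l; rewrite !mxE.
    by have [->|ne] := eqVneq l i; rewrite ?andbT ?andbF ?mul0r ?mulr0 // mulrC.
  apply/eqP => /eqP; rewrite mulmx_free_eq0 ?row_free_unit //.
  move=> /eqP/matrixP/(_ 0 i); rewrite !mxE !eqxx /= => /eqP; by rewrite oner_eq0.
case: sp Aeig Hsp deig => [|a [|? ?]] //= Aeig _ deig.
  by have [r _] := deig ord0.
exists a.
have dE : diag_mx d = ((a%:C)%C)%:M.
  apply/matrixP => i j; rewrite !mxE; case: eqP => [->|]; last by rewrite !mulr0n.
  by have [r -> ] := deig j; rewrite inE => /eqP ->.
have : B = ((a%:C)%C)%:M by rewrite BE dE mul_mx_scalar -scalemxAl mulVmx // scalemx1.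
move/matrixP => HB; apply/matrixP => i j; have := HB i j.
rewrite !mxE; case: (i == j) => /=; first by case.
by rewrite mulr0n => -[].
Qed.
Lemma sum_enumv (R : realType) (T : finType) (F : T -> R) :
  \sum_(k < #|T|) F (enum_val k) = \sum_z F z.
Proof.
rewrite (reindex (@enum_rank T)) /=; last first.
  by exists enum_val => x _; rewrite ?enum_rankK ?enum_valK.
by apply: eq_bigr => z _; rewrite enum_rankK.
Qed.

Lemma sumT (R : realType) s (F : 'I_s * 'I_2 -> R) :
  \sum_z F z = \sum_k F (k, ord0) + \sum_k F (k, ord_max).
Proof.
have -> : \sum_z F z = \sum_k \sum_l F (k, l).
  by rewrite pair_big /=; apply: eq_bigr => -[].
rewrite -big_split /=; apply: eq_bigr => k _.
by rewrite big_ord_recl big_ord1; congr (_ + F (k, _)); apply: val_inj.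
Qed.

Lemma sum_delta1 (R : realType) s (a : 'I_s) (g : 'I_s -> R) :
  \sum_k (a == k)%:R * g k = g a.
Proof.
rewrite (bigD1 a) //= eqxx mul1r big1 ?addr0 // => k /negbTE.
by rewrite eq_sym => ->; rewrite mul0r.
Qed.

Lemma sum_dd (R : realType) s (a b : 'I_s) (a1 b1 a2 b2 : R) :
  \sum_k (a1 * (a == k)%:R + b1) * (a2 * (k == b)%:R + b2)
  = a1 * a2 * (a == b)%:R + a1 * b2 + b1 * a2 + s%:R * (b1 * b2).
Proof.
have E : forall k, (a1 * (a == k)%:R + b1) * (a2 * (k == b)%:R + b2) =
  (a == k)%:R * (a1 * a2 * (k == b)%:R + a1 * b2) + (b1 * a2 * (k == b)%:R + b1 * b2).
  by move=> k; ring.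
under eq_bigr do rewrite E.
rewrite big_split /= sum_delta1 big_split /= -!mulr_sumr.
rewrite (eq_bigr (fun k => (b == k)%:R * 1)); last by move=> k _; rewrite eq_sym mulr1.
rewrite sum_delta1 sumr_const card_ord; ring.
Qed.

Definition al (R : realType) (s : nat) (h h' : 'I_2) : R :=
  if (h : nat) == h' then (if (h : nat) == 0%N then 3 * s%:R else - (3 * s%:R))
  else 4 * s%:R.
Definition be (R : realType) (h h' : 'I_2) : R :=
  if (h : nat) == h' then (if (h : nat) == 0%N then -6 else 6) else 0.
Definition fA (R : realType) (s : nat) (x y : 'I_s * 'I_2) : R :=
  al R s x.2 y.2 * (x.1 == y.1)%:R + be R x.2 y.2.
Definition Am (R : realType) (s : nat) : 'M[R]_#|{: 'I_s * 'I_2}| :=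
  \matrix_(i, j) @fA R s (enum_val i) (enum_val j).

Lemma I2_cases (h : 'I_2) : h = ord0 \/ h = ord_max.
Proof. by case: h => [[|[|//]]] ?; [left|right]; apply: val_inj. Qed.

Lemma Am2 (R : realType) s : Am R s *m Am R s = (25 * s%:R ^+ 2)%:M.
Proof.
apply/matrixP => i j; rewrite !mxE.
rewrite (eq_bigr (fun k => @fA R s (enum_val i) (enum_val k) * @fA R s (enum_val k) (enum_val j)));
  last by move=> k _; rewrite !mxE.
rewrite (sum_enumv (fun z => @fA R s (enum_val i) z * @fA R s z (enum_val j))).
rewrite -(inj_eq enum_val_inj).
case: (enum_val i) => a h; case: (enum_val j) => b h'.
rewrite sumT /fA /= !sum_dd xpair_eqE.
have e01 : (ord0 == ord_max :> 'I_2) = false by [].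
have e10 : (ord_max == ord0 :> 'I_2) = false by [].
case: (I2_cases h) => ->; case: (I2_cases h') => ->;
  case: (a == b); rewrite ?eqxx ?e01 ?e10 ?andbT ?andbF ?mulr0n ?mulr1n /al /be /=; ring.
Qed.
Lemma e01 : (ord0 == ord_max :> 'I_2) = false. Proof. by []. Qed.
Lemma e10 : (ord_max == ord0 :> 'I_2) = false. Proof. by []. Qed.

Lemma fA_sym (R : realType) s (x y : 'I_s * 'I_2) : @fA R s x y = @fA R s y x.
Proof.
case: x y => a h [b h']; rewrite /fA /= eq_sym.
by case: (I2_cases h) => ->; case: (I2_cases h') => ->.
Qed.

Lemma Am_inS (R : realType) s : (0 < s)%N -> in_S (@KsK2 s) (Am R s).
Proof.
move=> s0; have sR : (s%:R : R) != 0 by rewrite pnatr_eq0 -lt0n.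
split.
  by apply/matrixP => i j; rewrite !mxE fA_sym.
move=> i j; rewrite -(inj_eq enum_val_inj) mxE.
case: (enum_val i) => a h; case: (enum_val j) => b h'.
rewrite xpair_eqE /KsK2 /cart_prod /complete_graph /fA /=.
case: (I2_cases h) => ->; case: (I2_cases h') => ->;
  rewrite ?eqxx ?e01 ?e10 ?andbT ?andbF ?orbF /=;
  move=> H; have [E|/negbTE E] := eqVneq a b; rewrite ?E ?eqxx in H *;
  rewrite /al /be /= ?mulr1 ?mulr0 ?add0r ?addr0 ?mulr0n ?mulr1n //.
all: by rewrite ?eqxx ?oppr_eq0 ?mulf_eq0 ?negb_or ?pnatr_eq0 ?sR -?lt0n ?s0.
Qed.

Lemma eig_c (R : realType) n (M : 'M[R]_n) (c : R) i j :
  M *m M = (c ^+ 2)%:M -> i != j -> M i j != 0 -> eigenvalue M c.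
Proof.
move=> M2 ij Mij; apply/eigenvalueP; exists (row i (M + c%:M)).
  have E : (M + c%:M) *m M = c *: (M + c%:M).
    by rewrite mulmxDl M2 mul_scalar_mx scalerDr scale_scalar_mx -expr2 addrC.
  by rewrite -row_mul E; apply/rowP => k; rewrite !mxE.
apply/eqP => /matrixP /(_ 0 j); rewrite !mxE (negbTE ij) mulr0n addr0.
by apply/eqP.
Qed.

Lemma eig_sq (R : realType) n (M : 'M[R]_n) (c : R) i j :
  M *m M = (c ^+ 2)%:M -> i != j -> M i j != 0 ->
  forall a, eigenvalue M a = (a \in [:: c; - c]).
Proof.
move=> M2 ij Mij a; apply/idP/idP.
  move=> /eigenvalueP [v vM vnz].
  have : (a ^+ 2) *: v = (c ^+ 2) *: v.
    by rewrite -[RHS]mul_mx_scalar -M2 mulmxA vM -scalemxAl vM scalerA -expr2.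
  move/eqP; rewrite -subr_eq0 -scalerBl scaler_eq0 (negbTE vnz) orbF subr_eq0.
  by rewrite eqf_sqr !inE.
rewrite !inE => /orP [] /eqP ->; first exact: eig_c M2 ij Mij.
by apply: eig_c ij Mij; rewrite sqrrN.
Qed.

Lemma sumL (R : realType) s (a : 'I_s) (c d : R) (G : 'I_s -> R) :
  \sum_k (c * (a == k)%:R + d) * G k = c * G a + d * \sum_k G k.
Proof.
under eq_bigr do rewrite mulrDl -mulrA.
by rewrite big_split /= -!mulr_sumr sum_delta1.
Qed.

Lemma sumR (R : realType) s (b : 'I_s) (c d : R) (G : 'I_s -> R) :
  \sum_k G k * (c * (k == b)%:R + d) = c * G b + d * \sum_k G k.
Proof.
rewrite -sumL; apply: eq_bigr => k _; by rewrite mulrC eq_sym.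
Qed.

Lemma Am_SSP (R : realType) s : (0 < s)%N -> SSP (Am R s).
Proof.
move=> s0 X XT HA HI HC.
have sR : (s%:R : R) != 0 by rewrite pnatr_eq0 -lt0n.
pose g (x y : 'I_s * 'I_2) : R := X (enum_rank x) (enum_rank y).
have gE i j : X i j = g (enum_val i) (enum_val j) by rewrite /g !enum_valK.
have gsym x y : g x y = g y x.
  by rewrite /g -{1}XT mxE.
have gA x y : @fA R s x y != 0 -> g x y = 0.
  move=> nz; move/matrixP: HA => /(_ (enum_rank x) (enum_rank y)).
  by rewrite !mxE !enum_rankK => /eqP; rewrite mulf_eq0 (negbTE nz) => /eqP.
have gd x : g x x = 0.
  move/matrixP: HI => /(_ (enum_rank x) (enum_rank x)).
  by rewrite !mxE eqxx mulr1n mul1r.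
have gC x y : \sum_z @fA R s x z * g z y = \sum_z g x z * @fA R s z y.
  move/matrixP: HC => /(_ (enum_rank x) (enum_rank y)).
  rewrite !mxE => /eqP; rewrite subr_eq0 => /eqP.
  rewrite -(sum_enumv (fun z => @fA R s x z * g z y)).
  rewrite -(sum_enumv (fun z => g x z * @fA R s z y)).
  under eq_bigr do rewrite !mxE enum_rankK gE enum_rankK.
  by under [in RHS]eq_bigr do rewrite !mxE enum_rankK gE enum_rankK.
have g0same a b h : g (a, h) (b, h) = 0.
  have [->|ne] := eqVneq a b; first exact: gd.
  apply: gA; rewrite /fA /= (negbTE ne) mulr0 add0r.
  by case: (I2_cases h) => ->; rewrite /be /= ?oppr_eq0 pnatr_eq0.
have g0col a h h' : g (a, h) (a, h') = 0.
  case: (I2_cases h) => ->; case: (I2_cases h') => ->; try exact: gd;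
  by apply: gA; rewrite /fA /= eqxx mulr1 /al /be /= addr0 mulf_neq0 // pnatr_eq0.
have S1 b h : \sum_k g (k, h) (b, h) = 0 by apply: big1 => k _; apply: g0same.
have S2 a h : \sum_k g (a, h) (k, h) = 0 by apply: big1 => k _; apply: g0same.
have Ysym a b : g (a, ord_max) (b, ord0) = g (a, ord0) (b, ord_max).
  have := gC (a, ord0) (b, ord0); rewrite !sumT /fA /= sumL sumL sumR sumR.
  rewrite S1 S2 !g0same /al /be /=.
  rewrite !mulr0 !mul0r !add0r !addr0 => E.
  have nz : 4 * s%:R != 0 :> R by rewrite mulf_neq0 // pnatr_eq0.
  exact: (mulfI nz E).
have Cr b : \sum_k g (k, ord0) (b, ord_max) = \sum_k g (b, ord0) (k, ord_max).
  by apply: eq_bigr => k _; rewrite gsym Ysym.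
have E2 a b : 3 * s%:R * g (a, ord0) (b, ord_max) - 6 * \sum_k g (b, ord0) (k, ord_max)
   = - (3 * s%:R) * g (a, ord0) (b, ord_max) + 6 * \sum_k g (a, ord0) (k, ord_max).
  have := gC (a, ord0) (b, ord_max); rewrite !sumT /fA /= sumL sumL sumR sumR.
  rewrite S1 S2 !g0same /al /be /= Cr.
  by rewrite !mulr0 !addr0 !add0r (mulNr 6) => <-.
have r0 a : \sum_k g (a, ord0) (k, ord_max) = 0.
  by have := E2 a a; rewrite g0col !mulr0 ?add0r ?sub0r => E; lra.
have Y0 a b : g (a, ord0) (b, ord_max) = 0.
  have := E2 a b; rewrite !r0 !mulr0 subr0 addr0.
  set y := g _ _ => E.
  have : (6 * s%:R) * y = 0.
    have H6 : 6 * s%:R * y = 3 * s%:R * y - (- (3 * s%:R) * y) by ring.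
    by rewrite H6 {1}E subrr.
  by move/eqP; rewrite mulf_eq0 mulf_eq0 pnatr_eq0 (negbTE sR) /= => /eqP.
apply/matrixP => i j; rewrite gE mxE.
case: (enum_val i) => a h; case: (enum_val j) => b h'.
case: (I2_cases h) => ->; case: (I2_cases h') => ->; rewrite ?g0same ?Y0 //.
by rewrite Ysym Y0.
Qed.

Lemma sym_scalar' (R : realType) n (A : 'M[R]_n) (sp : seq R) : (0 < n)%N ->
  A^T = A -> (forall a, eigenvalue A a = (a \in sp)) -> (size sp <= 1)%N ->
  exists a, A = a%:M.
Proof. by case: n A => // n A _; apply: sym_scalar. Qed.

Unset Implicit Arguments. Set Strict Implicit. Set Printing Implicit Defensive.

Theorem mainTheorem15 (R : realType) (s : nat) :
  (3 <= s)%N ->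
  q_eq R (@KsK2 s) 2 /\
  exists A : 'M[R]_#|{: 'I_s * 'I_2}|,
    [/\ in_S (@KsK2 s) A, num_distinct_eig A 2 & SSP A].
Proof.
move=> s3; have s0 : (0 < s)%N by apply: leq_trans s3.
have sR : (s%:R : R) != 0 by rewrite pnatr_eq0 -lt0n.
pose x0 : 'I_s * 'I_2 := (Ordinal s0, ord0).
pose x1 : 'I_s * 'I_2 := (Ordinal s0, ord_max).
have x01 : enum_rank x0 != enum_rank x1 by rewrite (inj_eq enum_rank_inj) xpair_eqE e01 andbF.
have E01 : KsK2 x0 x1 by rewrite /KsK2 /cart_prod /complete_graph /= ?eqxx ?e01.
pose c : R := 5 * s%:R.
have A2 : Am R s *m Am R s = (c ^+ 2)%:M by rewrite Am2 /c exprMn; congr (_%:M); ring.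
have Anz : Am R s (enum_rank x0) (enum_rank x1) != 0.
  rewrite mxE !enum_rankK /fA /= ?eqxx /al /be /= ?mulr1n ?mulr1 ?addr0 mulf_neq0 //.
  by rewrite pnatr_eq0.
have Aeig : num_distinct_eig (Am R s) 2.
  exists [:: c; - c]; split => //; last exact: eig_sq A2 x01 Anz.
  rewrite /= andbT inE; apply/eqP => E.
  have : 0 < c by rewrite /c mulr_gt0 // ltr0n.
  lra.
split; last by exists (Am R s); split => //; [apply: Am_inS | apply: Am_SSP].
split; first by exists (Am R s); split => //; apply: Am_inS.
move=> A m [AT Hoff] [sp [_ sz Heig]].
rewrite leqNgt; apply/negP => m2.
have n0 : (0 < #|{: 'I_s * 'I_2}|)%N by apply/card_gt0P; exists x0.
have sp1 : (size sp <= 1)%N by rewrite sz; case: m m2 sz => [|[|]].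
have [a Aa] := sym_scalar' n0 AT Heig sp1.
have := Hoff _ _ x01; rewrite !enum_rankK E01 Aa mxE (negbTE x01) mulr0n eqxx.
by [].
Qed.
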